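(* Let $\epsilon>0$, $0<\delta<1$, positive integers $m\le n$, and $\sigma_1^2,\dots,\sigma_n^2>0$. Consider the weighted naive elimination algorithm: with $\omega_i=\delta\,\sigma_i^2/\sum_{j=1}^n\sigma_j^2$, it pulls each arm $i\in[n]$ exactly $\frac{2\sigma_i^2}{(\epsilon/2)^2}\ln\frac1{\omega_i}$ times, computes the sample mean $\hat\mu_i$ of each arm, and returns the $m$ arms with the largest sample means. This algorithm uses \[ 8\sum_{i\in[n]}\frac{\sigma_i^2}{\epsilon^2}\Big(\ln\frac1\delta+\mathrm{Ent}(\sigma^2_{1:n})\Big) \] samples, and it solves the $(\epsilon,\delta)$ top-$m$ arm identification problem.
   Context: Bandit setting: $n$ arms; pulling arm $i$ returns an independent sample from a distribution with unknown mean $\mu_i$ that is $\sigma_i^2$-sub-Gaussian ($\ln\mathbb E[e^{\lambda(X-\mu_i)}]\le\sigma_i^2\lambda^2/2$ for all real $\lambda$), $\sigma_i^2$ known. $\max^m_{i\in S}\mu_i$ denotes the $m$-th largest mean in $S$. An arm is $\epsilon$-approximate top-$m$ if its mean is at least $\max^m_{i\in[n]}\mu_i-\epsilon$. An algorithm solves the $(\epsilon,\delta)$ top-$m$ arm identification problem if for every such instance, with probability at least $1-\delta$, all $m$ returned arms are $\epsilon$-approximate top-$m$. $\mathrm{Ent}(a)=-\sum_i\hat a_i\ln\hat a_i$ with $\hat a_i=a_i/\sum_ja_j$ for a positive vector $a$. *)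

(* Defs.v *)
From HB Require Import structures.
From mathcomp Require Import all_boot all_order all_algebra.
From mathcomp Require Import all_classical all_reals all_analysis.
Set Implicit Arguments. Unset Strict Implicit. Unset Printing Implicit Defensive.
Import Order.TTheory GRing.Theory Num.Theory.
Local Open Scope classical_set_scope.
Local Open Scope ring_scope.

Definition Ent (R : realType) (n : nat) (a : 'I_n -> R) : R :=
  - \sum_(i < n) (a i / \sum_(j < n) a j) * ln (a i / \sum_(j < n) a j).

Definition mth_largest (R : realType) (n : nat) (m : nat) (mu : 'I_n -> R) : R :=
  nth 0 (sort (fun x y : R => y <= x) [seq mu i | i <- enum 'I_n]) m.-1.

Definition omega (R : realType) (n : nat) (delta : R) (sigma2 : 'I_n -> R)
  (i : 'I_n) : R := delta * sigma2 i / \sum_(j < n) sigma2 j.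

Definition num_pulls (R : realType) (n : nat) (eps delta : R)
  (sigma2 : 'I_n -> R) (i : 'I_n) : R :=
  2 * sigma2 i / (eps / 2) ^+ 2 * ln (1 / omega delta sigma2 i).

Definition pulls (R : realType) (n : nat) (eps delta : R)
  (sigma2 : 'I_n -> R) (i : 'I_n) : nat :=
  `|Num.ceil (num_pulls eps delta sigma2 i)|%N.

Definition sample_mean (T : Type) (R : realType) (n : nat) (eps delta : R)
  (sigma2 : 'I_n -> R) (X : 'I_n -> nat -> T -> R) (i : 'I_n) (w : T) : R :=
  (\sum_(k < pulls eps delta sigma2 i) X i k w) / (pulls eps delta sigma2 i)%:R.

(* arm distribution D with mean mu that is sigma2-sub-Gaussian:
   E[e^{lambda (X - mu)}] <= e^{sigma2 lambda^2 / 2} for all real lambda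
   (equivalently ln E[e^{lambda(X-mu)}] <= sigma2 lambda^2/2) *)
Definition arm_ok (R : realType) (D : probability R R) (mu sigma2 : R) : Prop :=
  (\int[D]_x (x%:E) = mu%:E)%E /\
  forall lambda : R,
    (\int[D]_x (expR (lambda * (x - mu)))%:E <= (expR (sigma2 * lambda ^+ 2 / 2))%:E)%E.

Definition mutually_independent d (T : measurableType d) (R : realType)
  (P : probability T R) (I : eqType) (Y : I -> T -> R) : Prop :=
  forall (J : seq I) (B : I -> set R), uniq J ->
    (forall j, j \in J -> measurable (B j)) ->
    fine (P (\bigcap_(j in [set` J]) (Y j @^-1` B j))) =
    \prod_(j <- J) fine (P (Y j @^-1` B j)).

(* Main.v *)
Require Import Defs.
From HB Require Import structures.
From mathcomp Require Import all_boot all_order all_algebra.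
From mathcomp Require Import all_classical all_reals all_analysis.
From mathcomp Require Import lra ring.
Import Order.TTheory GRing.Theory Num.Theory.
Local Open Scope classical_set_scope.
Local Open Scope ring_scope.
From mathcomp Require Import measurable_realfun.
Lemma alg1 (R : realType) (S e d Q : R) : S != 0 -> e != 0 ->
  8 * (S / e ^+ 2) * (- d - Q / S) = 8 / e ^+ 2 * (S * - d - Q).
Proof. by move=> hS he; field; rewrite he hS. Qed.

Lemma alg2 (R : realType) (s e d l L : R) : e != 0 ->
  2 * s / (e / 2) ^+ 2 * (- d - l + L) = 8 / e ^+ 2 * (s * - d - s * (l - L)).
Proof. by move=> he; field; rewrite he. Qed.

Lemma part1 (R : realType) (n : nat) (eps delta : R) (sigma2 : 'I_n -> R)
  (heps : 0 < eps) (hd0 : 0 < delta) (hs : forall i, 0 < sigma2 i) :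
  \sum_(i < n) num_pulls eps delta sigma2 i =
    8 * (\sum_(i < n) sigma2 i / eps ^+ 2) * (ln (1 / delta) + Ent sigma2).
Proof.
set S := \sum_(j < n) sigma2 j.
case: n sigma2 hs @S => [|n] sigma2 hs S.
  by rewrite !big_ord0 mulr0 mul0r.
have S0 : 0 < S.
  rewrite /S big_ord_recl; apply: ltr_pwDl => //.
  by apply: sumr_ge0 => i _; exact: ltW.
have e0 : eps != 0 by rewrite gt_eqF.
have hl i : ln (1 / omega delta sigma2 i) = - ln delta - ln (sigma2 i) + ln S.
  rewrite /omega div1r lnV ?posrE; last by rewrite divr_gt0 // mulr_gt0.
  by rewrite ln_div ?posrE ?mulr_gt0 // lnM ?posrE //; lra.
have hE i : ln (sigma2 i / S) = ln (sigma2 i) - ln S by rewrite ln_div ?posrE.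
rewrite /Ent /num_pulls; under eq_bigr do rewrite hl.
have -> : \sum_(i < n.+1) sigma2 i / (\sum_(j < n.+1) sigma2 j) * ln (sigma2 i / (\sum_(j < n.+1) sigma2 j)) =
  (\sum_(i < n.+1) sigma2 i * (ln (sigma2 i) - ln S)) / S.
  by rewrite mulr_suml; apply: eq_bigr => i _; rewrite -/S hE mulrAC.
rewrite div1r lnV ?posrE // -/S.
rewrite -mulr_suml.
rewrite [X in _ = X](_ : _ = 8 / eps ^+ 2 * (S * - ln delta
   - \sum_(i < n.+1) sigma2 i * (ln (sigma2 i) - ln S))); last first.
  by apply: alg1 => //; exact: lt0r_neq0.
have -> : S * - ln delta = \sum_(i < n.+1) sigma2 i * - ln delta by rewrite /S mulr_suml.
rewrite -sumrB mulr_sumr; apply: eq_bigr => i _; exact: alg2.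
Qed.
Import HBNNSimple.
Local Open Scope ereal_scope.
Section key.
Context d (T : measurableType d) (R : realType) (P : probability T R).

Lemma mEFin d' (T' : measurableType d') (D : set T') (g : T' -> R) : measurable_fun D g -> measurable_fun D (EFin \o g).
Proof. by move=> mg; apply/measurable_realfun.measurable_EFinP. Qed.
Arguments mEFin {d' T' D g}.

Definition gap (h : R -> R) (mh : measurable_fun setT h) :=
  nnsfun_approx (@measurableT _ R) (mEFin mh).
Arguments gap {h}.

Lemma conv_approx (U : T -> R) (W : T -> R) (h : R -> R)
  (mU : measurable_fun setT U) (mW : measurable_fun setT W) (W0 : forall w, (0 <= W w)%R)
  (mh : measurable_fun setT h) (h0 : forall x, (0 <= h x)%R) :
  (fun n => \int[P]_w ((gap mh n (U w)) * W w)%:E) @ \oo -->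
    \int[P]_w ((h (U w)) * W w)%:E.
Proof.
set g := gap mh.
have -> : \int[P]_w ((h (U w)) * W w)%:E =
    \int[P]_w (fun w => limn (fun n => ((g n (U w)) * W w)%:E)) w.
  apply: eq_integral => w _; apply/esym/cvg_lim => //.
  under eq_fun do rewrite EFinM.
  rewrite EFinM; apply: cvgeZr => //.
  apply: (@cvg_nnsfun_approx _ _ _ setT measurableT (fun x => (h x)%:E) (mEFin mh)) => // x _.
  by rewrite lee_fin.
apply: cvg_monotone_convergence => //.
- move=> n; apply: mEFin; apply: measurable_realfun.measurable_funM => //.
  by apply: measurableT_comp => //; exact/measurable_funP.
- by move=> n w _; rewrite lee_fin mulr_ge0.
- move=> w _ a b ab; rewrite lee_fin ler_wpM2r //.
  exact/lefP/nd_nnsfun_approx.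
Qed.

Lemma simple_step (U W : T -> R)
  (mU : measurable_fun setT U) (mW : measurable_fun setT W) (W0 : forall w, (0 <= W w)%R)
  (g : {nnsfun R >-> R}) :
  \int[P]_w ((g (U w)) * W w)%:E = \sum_(y \in range g)
     (y%:E * \int[P]_w ((\1_(g @^-1` [set y]) (U w)) * W w)%:E).
Proof.
under eq_integral do rewrite fimfunE mulr_fsuml -fsumEFin //.
rewrite ge0_integral_fsum //; last 2 first.
- move=> y; apply: mEFin; apply: measurable_realfun.measurable_funM => //.
  apply: measurable_realfun.measurable_funM => //.
  by apply: measurableT_comp => //.
- move=> y w _; rewrite lee_fin mulr_ge0 //.
  have := nnfun_muleindic_ge0 g y (U w); by rewrite -EFinM lee_fin.
apply: eq_fsbigr => y; rewrite inE => -[x _ <-].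
under eq_integral do rewrite -mulrA EFinM.
rewrite ge0_integralZl //.
- apply: mEFin; apply: measurable_realfun.measurable_funM => //.
  by apply: measurableT_comp => //.
- by move=> w _; rewrite lee_fin mulr_ge0.
- by rewrite lee_fin.
Qed.

Lemma indic_pre (U : T -> R) (A : set R) w : \1_A (U w) = \1_(U @^-1` A) w :> R.
Proof. by []. Qed.

Lemma key_lemma (U W : T -> R)
  (mU : measurable_fun setT U) (mW : measurable_fun setT W) (W0 : forall w, (0 <= W w)%R)
  (c : R) (c0 : (0 <= c)%R)
  (HW : forall A, measurable A ->
     \int[P]_w ((\1_A (U w)) * W w)%:E = P (U @^-1` A) * c%:E)
  (h : R -> R) (mh : measurable_fun setT h) (h0 : forall x, (0 <= h x)%R) :
  \int[P]_w ((h (U w)) * W w)%:E = \int[P]_w (h (U w))%:E * c%:E.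
Proof.
have mpre A : measurable A -> measurable (U @^-1` A).
  by move=> mA; rewrite -[U @^-1` A]setTI; exact: mU.
have H1 A : measurable A -> \int[P]_w ((\1_A (U w)) * 1)%:E = P (U @^-1` A) * 1%:E.
  move=> mA; under eq_integral do rewrite mulr1 indic_pre.
  by rewrite integral_indic // ?setIT ?mule1 //; exact: mpre.
have fP A : measurable A -> P (U @^-1` A) = (fine (P (U @^-1` A)))%:E.
  by move=> mA; rewrite fineK // fin_num_measure //; exact: mpre.
have E n : \int[P]_w ((gap mh n (U w)) * W w)%:E =
    \int[P]_w ((gap mh n (U w)) * 1)%:E * c%:E.
  rewrite !simple_step //.
  under eq_fsbigr => y _ do rewrite HW // fP // -!EFinM.
  under [in RHS]eq_fsbigr => y _ do rewrite H1 // fP // -!EFinM.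
  by rewrite !fsumEFin // -EFinM mulr_fsuml; congr (_%:E); apply: eq_fsbigr => y _; rewrite mulr1 mulrA.
have cv1 := conv_approx _ _ _ mU mW W0 mh h0.
have cv2 := cvgeZr (fin_numE c%:E) (conv_approx _ _ _ mU (measurable_cst (1%R : R)) (fun _ => ler01) mh h0).
rewrite (_ : (fun n => \int[P]_w (gap mh n (U w) * W w)%:E) =
   (fun n => \int[P]_w (gap mh n (U w) * cst 1 w)%:E * c%:E)) in cv1; last first.
  by apply/funext => n; rewrite E.
rewrite -(cvg_lim _ cv1) // (cvg_lim _ cv2) //.
by under eq_integral do rewrite /= mulr1.
Qed.
End key.

Section indep.
Context d (T : measurableType d) (R : realType) (P : probability T R).
Context (I : eqType) (Y : I -> T -> R) (mY : forall i, measurable_fun setT (Y i)).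
Context (ind : mutually_independent P Y).
Context (f : I -> R -> R) (mf : forall i, measurable_fun setT (f i)) (f0 : forall i x, (0 <= f i x)%R).
Context (fin : forall i, \int[P]_w (f i (Y i w))%:E \is a fin_num).

Definition Cs (L : seq I) (B : I -> set R) := \bigcap_(l in [set` L]) (Y l @^-1` B l).

Lemma mprod (J : seq I) (F : I -> T -> R) : (forall j, measurable_fun setT (F j)) ->
  measurable_fun setT (fun w => \prod_(j <- J) F j w)%R.
Proof.
elim: J => [|j J IH] mF.
  have -> : (fun w => \prod_(j <- [::]) F j w)%R = cst 1%R by apply/funext => w; rewrite big_nil.
  exact: measurable_cst.
have -> : (fun w => \prod_(i <- j :: J) F i w)%R = (F j \* (fun w => \prod_(i <- J) F i w))%R.
  by apply/funext => w; rewrite big_cons.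
by apply: measurable_realfun.measurable_funM => //; exact: IH.
Qed.

Lemma mCs L B : (forall l, measurable (B l)) -> measurable (Cs L B).
Proof.
move=> mB; apply: fin_bigcap_measurable; first exact: finite_seq.
by move=> l _; rewrite -[_ @^-1` _]setTI; exact: mY.
Qed.

Lemma Cs_cons j L B : Cs (j :: L) B = Y j @^-1` B j `&` Cs L B.
Proof.
rewrite /Cs; apply/seteqP; split => w /=.
  move=> H; split; first by apply: H; rewrite /= in_cons eqxx.
  by move=> l Ll; apply: H; rewrite /= in_cons Ll orbT.
move=> [Hj HL] l; rewrite /= in_cons => /orP [/eqP -> //|Ll].
exact: HL.
Qed.

Lemma indic_ge0' (A : set T) w : (0 <= \1_A w :> R)%R.
Proof. by rewrite /indic ler0n. Qed.

Lemma mpre j A : measurable A -> measurable (Y j @^-1` A).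
Proof. by move=> mA; rewrite -[_ @^-1` _]setTI; exact: mY. Qed.

Lemma E_prod_gen (J : seq I) : forall (L : seq I) (B : I -> set R),
  uniq (J ++ L) -> (forall l, measurable (B l)) ->
  \int[P]_w (((\prod_(j <- J) f j (Y j w)) * \1_(Cs L B) w)%R)%:E
  = (((\prod_(j <- J) fine (\int[P]_w (f j (Y j w))%:E)) * fine (P (Cs L B)))%R)%:E.
Proof.
elim: J => [|j J IH] L B uJL mB.
  under eq_integral do rewrite big_nil mul1r.
  rewrite big_nil mul1r integral_indic //; last exact: mCs.
  by rewrite setIT fineK // fin_num_measure //; exact: mCs.
set W := fun w => (\prod_(i <- J) f i (Y i w) * \1_(Cs L B) w)%R.
set c := (\prod_(i <- J) fine (\int[P]_w (f i (Y i w))%:E) * fine (P (Cs L B)))%R.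
have mW : measurable_fun setT W.
  apply: measurable_realfun.measurable_funM.
    apply: (mprod J (fun i w => f i (Y i w))) => i.
    exact: measurableT_comp (mf i) (mY i).
  by apply: measurable_indic; exact: mCs.
have W0 w : (0 <= W w)%R.
  by apply: mulr_ge0; [apply: prodr_ge0 => i _; exact: f0|exact: indic_ge0'].
have c0 : (0 <= c)%R.
  apply: mulr_ge0; last exact/fine_ge0/measure_ge0.
  by apply: prodr_ge0 => i _; apply/fine_ge0/integral_ge0 => w _; rewrite lee_fin.
have jL : j \notin L.
  by move: uJL; rewrite cat_cons /= mem_cat negb_or => /andP[/andP[_ ->]].
have uL : uniq L by move: uJL; rewrite cat_cons /= cat_uniq => /and4P[_ _ _ ->].
have HW A : measurable A ->
    \int[P]_w ((\1_A (Y j w)) * W w)%:E = P (Y j @^-1` A) * c%:E.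
  move=> mA.
  pose B' := fun l => if l == j then A else B l.
  have mB' l : measurable (B' l) by rewrite /B'; case: ifP.
  have CL : Cs L B' = Cs L B.
    rewrite /Cs; apply/seteqP; split => w /= H l Ll; have := H l Ll;
      rewrite /B'; case: eqP => // lj; by move: jL; rewrite -lj Ll.
  rewrite (eq_integral (fun w => ((\prod_(i <- J) f i (Y i w)) * \1_(Cs (j :: L) B') w)%R%:E));
    last first.
    move=> w _; rewrite Cs_cons CL indicI /W /B' eqxx /= indic_pre.
    by rewrite mulrCA.
  rewrite IH //; last first.
    by rewrite uniq_catC /= mem_cat orbC -mem_cat uniq_catC.
  rewrite /Cs (ind (j :: L) B' _ (fun l _ => mB' l)); last by rewrite /= jL uL.
  have eqL : (\prod_(l <- L) fine (P (Y l @^-1` B' l)) = \prod_(l <- L) fine (P (Y l @^-1` B l)))%R.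
    apply: eq_big_seq => l Ll; rewrite /B'; case: eqP => // lj; by move: jL; rewrite -lj Ll.
  rewrite big_cons {1}/B' eqxx eqL.
  rewrite -(ind L B uL (fun l _ => mB l)).
  rewrite -(fineK (fin_num_measure P _ (mpre j A mA))) -EFinM; congr (_%:E).
  by rewrite /c -/(Cs L B) mulrCA mulrA.
rewrite (eq_integral (fun w => (f j (Y j w) * W w)%R%:E)); last first.
  by move=> w _; rewrite big_cons /W mulrA.
rewrite (key_lemma _ _ _ P (Y j) W (mY j) mW W0 c c0 HW (f j) (mf j) (f0 j)).
by rewrite -(fineK (fin j)) -EFinM big_cons /c mulrA.
Qed.

Lemma E_prod (J : seq I) : uniq J ->
  \int[P]_w (\prod_(j <- J) f j (Y j w))%:E
  = (\prod_(j <- J) fine (\int[P]_w (f j (Y j w))%:E))%:E.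
Proof.
move=> uJ; have := E_prod_gen J [::] (fun _ => setT).
rewrite cats0 => /(_ uJ (fun _ => measurableT)).
have -> : Cs [::] (fun _ => setT) = setT.
  by rewrite /Cs; apply/seteqP; split => w //= _ l; rewrite in_nil.
rewrite probability_setT /= mulr1 => <-.
by apply: eq_integral => w _; rewrite /indic in_setT mulr1.
Qed.

End indep.

Lemma mexpaff (R : realType) (a b : R) : measurable_fun setT (fun x : R => expR (a * (x - b)))%R.
Proof.
apply: measurableT_comp; first exact: measurable_expR.
apply: measurable_realfun.measurable_funM; first exact: measurable_cst.
by apply: measurable_funB => //; exact: measurable_cst.
Qed.

Lemma transfer d (T : measurableType d) (R : realType) (P : probability T R)
  (U : T -> R) (mU : measurable_fun setT U) (Dl : probability R R)
  (law : forall B, measurable B -> P (U @^-1` B) = Dl B)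
  (g : R -> R) (mg : measurable_fun setT g) (g0 : forall x, (0 <= g x)%R) :
  \int[P]_w (g (U w))%:E = \int[Dl]_x (g x)%:E.
Proof.
rewrite [RHS](eq_measure_integral (pushforward P U)); last first.
  by move=> A mA _; rewrite /pushforward; exact/esym/law.
rewrite ge0_integral_pushforward //; first exact: mEFin.
by move=> y _; rewrite lee_fin.
Qed.

Section chernoff.
Context d (T : measurableType d) (R : realType) (P : probability T R) (n : nat).
Context (X : 'I_n -> nat -> T -> R) (mX : forall i k, measurable_fun setT (X i k)).
Context (ind : mutually_independent P (fun ik : 'I_n * nat => X ik.1 ik.2)).
Context (mu sig lam : 'I_n -> R).
Context (mgf : forall i k, \int[P]_w (expR (lam i * (X i k w - mu i)))%:E
   <= (expR (sig i * lam i ^+ 2 / 2))%:E).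

Definition Yik := fun ik : 'I_n * nat => X ik.1 ik.2.
Definition fik := fun (ik : 'I_n * nat) (x : R) => expR (lam ik.1 * (x - mu ik.1)).

Lemma fin_fik ik : \int[P]_w (fik ik (Yik ik w))%:E \is a fin_num.
Proof.
rewrite ge0_fin_numE; last by apply: integral_ge0 => w _; rewrite lee_fin expR_ge0.
exact: le_lt_trans (mgf ik.1 ik.2) (ltry _).
Qed.

Lemma chernoff i (K : nat) (c s t : R) : (0 < c)%R -> lam i = (s * c)%R ->
  P [set w | t <= s * \sum_(k < K) (X i k w - mu i)]%R
  <= (expR (K%:R * (sig i * lam i ^+ 2 / 2) - c * t))%:E.
Proof.
move=> c0 lamE.
set Z := fun w => (s * \sum_(k < K) (X i k w - mu i))%R.
have mZ : measurable_fun setT Z.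
  apply: measurable_realfun.measurable_funM; first exact: measurable_cst.
  apply: measurable_sum => k; apply: measurable_funB => //; exact: measurable_cst.
set Bd := [set w | t <= Z w]%R.
have mBd : measurable Bd.
  have -> : Bd = Z @^-1` `[t, +oo[%classic.
    by apply/seteqP; split => w /=; rewrite in_itv /= andbT.
  by rewrite -[_ @^-1` _]setTI; apply: mZ => //; exact: measurable_itv.
have mEZ : measurable_fun setT (fun w => expR (c * Z w))%R.
  apply: measurableT_comp; first exact: measurable_expR.
  by apply: measurable_realfun.measurable_funM => //; exact: measurable_cst.
have key : (expR (c * t))%:E * P Bd <= \int[P]_w (expR (c * Z w))%:E.
  have -> : P Bd = \int[P]_w (\1_Bd w)%:E by rewrite integral_indic // setIT.
  rewrite -ge0_integralZl //; last exact/mEFin/measurable_indic.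
  apply: ge0_le_integral => //; last 2 first.
  - exact: mEFin.
  - move=> w _; rewrite -EFinM lee_fin /indic.
    case: (boolP (w \in Bd)) => [|_]; last by rewrite mulr0 expR_ge0.
    rewrite inE /= => Hw; rewrite mulr1 ler_expR.
    by rewrite ler_pM2l.
  - apply: emeasurable_funM; first exact: measurable_cst.
    exact/mEFin/measurable_indic.
set J := [seq (i, k) | k <- iota 0 K].
have uJ : uniq J.
  by rewrite map_inj_uniq ?iota_uniq // => a b [].
have eqZ w : expR (c * Z w) = (\prod_(j <- J) fik j (Yik j w))%R.
  rewrite big_map /fik /Yik /= /Z mulrA (mulrC c s) -lamE mulr_sumr expR_sum.
  by rewrite [in RHS](_ : iota 0 K = index_iota 0 K) ?big_mkord // /index_iota subn0.
have mf ik : measurable_fun setT (fik ik) by exact: mexpaff.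
have f0 ik x : (0 <= fik ik x)%R by exact: expR_ge0.
have mY ik : measurable_fun setT (Yik ik) by exact: mX.
have := E_prod _ _ _ P _ Yik mY ind fik mf f0 fin_fik J uJ.
move=> EP.
have key2 : (expR (c * t))%:E * P Bd <= (expR (sig i * lam i ^+ 2 / 2) ^+ K)%:E.
  apply: (le_trans key).
  rewrite (_ : \int[P]_w (expR (c * Z w))%:E = \int[P]_w (\prod_(j <- J) fik j (Yik j w))%:E); last first.
    by apply: eq_integral => w _; rewrite eqZ.
  rewrite EP lee_fin big_map.
  rewrite (_ : expR (sig i * lam i ^+ 2 / 2) ^+ K = \prod_(k <- iota 0 K) expR (sig i * lam i ^+ 2 / 2))%R; last first.
    by rewrite (_ : iota 0 K = index_iota 0 K) ?prodr_const_nat ?subn0 // /index_iota subn0.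
  apply: ler_prod => k _; apply/andP; split.
    by apply/fine_ge0/integral_ge0 => w _; rewrite lee_fin expR_ge0.
  by rewrite -lee_fin fineK ?fin_fik //; exact: (mgf i k).
have fPB : P Bd = (fine (P Bd))%:E by rewrite fineK // fin_num_measure.
rewrite fPB lee_fin; move: key2; rewrite fPB -EFinM lee_fin => key2.
rewrite expRD expRN expRM_natl -(ler_pM2l (expR_gt0 (c * t))) mulrCA mulfV ?mulr1 //.
by rewrite gt_eqF // expR_gt0.
Qed.
End chernoff.

Lemma pulls_ge (R : realType) (x : R) : (0 < x)%R ->
  (x <= (`|Num.ceil x|%N)%:R)%R /\ (0 < `|Num.ceil x|%N)%N.
Proof.
move=> x0; have c0 : (0 <= Num.ceil x)%R by rewrite ceil_ge0 (lt_trans _ x0) // ltrN10.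
split; first by rewrite natr_absz ger0_norm // ceil_ge.
by rewrite absz_gt0 ceil_neq0 x0 orbT.
Qed.

Lemma union_bound d (T : measurableType d) (R : realType) (P : probability T R)
  (I : Type) (s : seq I) (F : I -> set T) : (forall i, measurable (F i)) ->
  measurable (\big[setU/set0]_(i <- s) F i) /\
  P (\big[setU/set0]_(i <- s) F i) <= \sum_(i <- s) P (F i).
Proof.
move=> mF; elim: s => [|i s [mU IH]]; first by rewrite !big_nil measure0.
rewrite !big_cons; split; first exact: measurableU.
apply: (le_trans (measureU2 _ _ _)) => //.
by rewrite leeD2l.
Qed.

Lemma arith (R : realType) (sig eps K L s : R) : (0 < sig)%R -> (0 < eps)%R -> (s ^+ 2 = 1)%R ->
  (2 * sig / (eps / 2) ^+ 2 * L <= K)%R ->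
  (K * (sig * (s * (eps / (2 * sig))) ^+ 2 / 2) - eps / (2 * sig) * (K * eps / 2) <= - L)%R.
Proof.
move=> s0 e0 s2 hK.
have -> : (K * (sig * (s * (eps / (2 * sig))) ^+ 2 / 2) - eps / (2 * sig) * (K * eps / 2)
   = - (K * eps ^+ 2 / (8 * sig)))%R.
  rewrite exprMn s2 mul1r; field; rewrite gt_eqF //.
rewrite lerN2 ler_pdivlMr; last by rewrite mulr_gt0.
rewrite (_ : (2 * sig / (eps / 2) ^+ 2 * L = (L * (8 * sig)) / eps ^+ 2)%R) in hK; last first.
  by field; rewrite gt_eqF.
by move: hK; rewrite ler_pdivrMr ?exprn_gt0.
Qed.

Lemma mset d (T : measurableType d) (R : realType) (Z : T -> R) (t : R) :
  measurable_fun setT Z -> measurable [set w | t <= Z w]%R.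
Proof.
move=> mZ; have -> : [set w | t <= Z w]%R = Z @^-1` `[t, +oo[%classic.
  by apply/seteqP; split => w /=; rewrite in_itv /= andbT.
by rewrite -[_ @^-1` _]setTI; apply: mZ => //; exact: measurable_itv.
Qed.

Local Close Scope ereal_scope.
Local Open Scope ring_scope.

Lemma cnt (n : nat) (P : pred 'I_n) : count P (enum 'I_n) = #|[pred j | P j]|.
Proof. by rewrite cardE /enum_mem -enumT size_filter (@eq_filter _ _ predT) // filter_predT. Qed.

Lemma mth_count (R : realType) n m (mu : 'I_n -> R) : (0 < m)%N -> (m <= n)%N ->
  (m <= #|[pred j | (mth_largest m mu <= mu j)%R]|)%N.
Proof.
move=> m0 mn; rewrite -cnt -(count_map mu (fun y => mth_largest m mu <= y)).
set s := map _ _. set x := mth_largest m mu.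
have pl : perm_eq (sort (fun x y : R => y <= x) s) s by rewrite perm_sort perm_refl.
move/permP: pl => pl.
rewrite -pl.
set l := sort _ s.
have sl : size l = n by rewrite size_sort size_map size_enum_ord.
have so : sorted (fun x y : R => y <= x) l.
  by apply: sort_sorted => a b; exact: le_total.
rewrite -(cat_take_drop m l) count_cat.
apply: leq_trans (leq_addr _ _).
have : all (fun y => x <= y) (take m l).
  apply/(all_nthP 0) => k; rewrite size_takel ?sl // => km.
  rewrite nth_take //.
  have := sorted_leq_nth (@le_trans _ R^d) (@lexx _ R^d) 0 so.
  move=> /(_ k m.-1); rewrite !inE sl => H.
  apply: H; [exact: leq_trans km mn | by rewrite prednK // (leq_trans _ mn) // ltn_predL | by rewrite -ltnS prednK].
by rewrite all_count => /eqP ->; rewrite size_takel ?sl.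
Qed.

Lemma fin_arith (R : realType) (Ki Kj a b mi mj ms e : R) : 0 < Ki -> 0 < Kj -> a - Ki * mi < Ki * e / 2 ->
  Kj * mj - b < Kj * e / 2 -> b / Kj <= a / Ki -> ms <= mj -> mi < ms - e -> False.
Proof.
move=> Ki0 Kj0 ha hb hab h1 h2.
have hx : a / Ki < mi + e / 2 by rewrite ltr_pdivrMr //; nra.
have hy : mj - e / 2 < b / Kj by rewrite ltr_pdivlMr //; nra.
lra.
Qed.

Theorem lemma2 (R : realType) (n m : nat) (eps delta : R) (sigma2 : 'I_n -> R)
  (hm : (0 < m)%N) (hmn : (m <= n)%N) (heps : 0 < eps)
  (hd0 : 0 < delta) (hd1 : delta < 1) (hs : forall i, 0 < sigma2 i) :
  (* sample complexity *)
  \sum_(i < n) num_pulls eps delta sigma2 i =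
    8 * (\sum_(i < n) sigma2 i / eps ^+ 2) * (ln (1 / delta) + Ent sigma2)
  /\
  (* correctness: (eps, delta) top-m identification on every instance *)
  (forall (d : measure_display) (T : measurableType d) (P : probability T R)
     (mu : 'I_n -> R) (D : 'I_n -> probability R R)
     (X : 'I_n -> nat -> T -> R),
     (forall i, arm_ok (D i) (mu i) (sigma2 i)) ->
     (forall i k, measurable_fun setT (X i k)) ->
     (forall i k (B : set R), measurable B -> P (X i k @^-1` B) = D i B) ->
     mutually_independent P (fun ik : 'I_n * nat => X ik.1 ik.2) ->
     exists A : set T, measurable A /\ ((1 - delta)%:E <= P A)%E /\
       forall w, A w ->
         forall S : {set 'I_n}, #|S| = m ->
           (forall i j, i \in S -> j \notin S ->
              sample_mean eps delta sigma2 X j w <= sample_mean eps delta sigma2 X i w) ->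
           forall i, i \in S -> mth_largest m mu - eps <= mu i).
Proof.
split; first exact: part1.
move=> d T P mu D X arm mX law ind.
have n0 : (0 < n)%N := leq_trans hm hmn.
set Ssum := \sum_(j < n) sigma2 j.
have s_le i : sigma2 i <= Ssum.
  rewrite /Ssum (bigD1 i) //= lerDl; apply: sumr_ge0 => j _; exact: ltW.
have S0 : 0 < Ssum by apply: lt_le_trans (hs (Ordinal n0)) (s_le _).
have om_pos i : 0 < omega delta sigma2 i by rewrite /omega divr_gt0 ?mulr_gt0.
have om_lt1 i : omega delta sigma2 i < 1.
  rewrite /omega ltr_pdivrMr // mul1r -/Ssum.
  have := s_le i; have := hs i; nra.
have np_pos i : 0 < num_pulls eps delta sigma2 i.
  rewrite /num_pulls mulr_gt0 ?divr_gt0 ?mulr_gt0 ?exprn_gt0 ?divr_gt0 //.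
  by apply: ln_gt0; rewrite div1r invf_gt1.
set mstar := mth_largest m mu.
pose good i := (mstar <= mu i).
pose s i : R := if good i then -1 else 1.
pose cc i : R := eps / (2 * sigma2 i).
pose lam i := s i * cc i.
pose K i := pulls eps delta sigma2 i.
pose Bad i := [set w | (K i)%:R * eps / 2 <= s i * \sum_(k < K i) (X i k w - mu i)].
have cc0 i : 0 < cc i by rewrite divr_gt0 ?mulr_gt0.
have s2 i : s i ^+ 2 = 1 by rewrite /s; case: (good i); rewrite ?sqrrN expr1n.
have mgf i k : (\int[P]_w (expR (lam i * (X i k w - mu i)))%:E
   <= (expR (sigma2 i * lam i ^+ 2 / 2))%:E)%E.
  rewrite (transfer _ _ _ P (X i k) (mX i k) (D i) (law i k) _ (mexpaff _ (lam i) (mu i)) (fun x => expR_ge0 _)).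
  exact: (arm i).2.
have bad_le i : (P (Bad i) <= (omega delta sigma2 i)%:E)%E.
  apply: le_trans (chernoff _ _ _ P _ X mX ind mu sigma2 lam mgf i (K i) (cc i) (s i) ((K i)%:R * eps / 2) (cc0 i) erefl) _.
  rewrite lee_fin -[X in _ <= X](lnK (om_pos i)) ler_expR.
  have -> : ln (omega delta sigma2 i) = - ln (1 / omega delta sigma2 i).
    by rewrite div1r lnV ?opprK // posrE.
  apply: arith; [exact: hs | exact: heps | exact: s2 | ].
  by have := (pulls_ge _ _ (np_pos i)).1.
have mBad i : measurable (Bad i).
  apply: mset; apply: measurable_realfun.measurable_funM; first exact: measurable_cst.
  apply: measurable_sum => k; apply: measurable_funB => //; exact: measurable_cst.
set U := \big[setU/set0]_(i < n) Bad i.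
have [mU PU] := union_bound _ _ _ P _ (index_enum 'I_n) Bad mBad.
have sum_om : \sum_(i < n) omega delta sigma2 i = delta.
  rewrite /omega -/Ssum -mulr_suml -mulr_sumr -/Ssum mulfK //; exact: lt0r_neq0.
exists (~` U); split; first exact: measurableC.
split.
  rewrite probability_setC //.
  have PUle : (P U <= delta%:E)%E.
    apply: le_trans PU _; rewrite -sum_om -sumEFin; exact: lee_sum.
  have fPU : P U = (fine (P U))%:E by rewrite fineK // fin_num_measure.
  move: PUle; rewrite fPU -EFinB !lee_fin => PUle; lra.
move=> w /= nU S cardS top i iS.
rewrite leNgt; apply/negP => lt_i.
have ngi : ~~ good i by rewrite /good -ltNge; lra.
have nBad j : ~ Bad j w.
  by move=> Bj; apply: nU; rewrite /U (bigD1 j) //=; left.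
case: (pickP [pred j | good j && (j \notin S)]) => [j /andP[gj jS] | none]; last first.
  have sub : [pred j | good j] \subset S :\ i.
    apply/fintype.subsetP => j; rewrite !inE => gj; apply/andP; split.
      by apply/eqP => ji; move: gj; rewrite ji (negbTE ngi).
    by have := none j; rewrite /= gj /= => /negbFE.
  have c1 : (m <= #|[pred j | good j]|)%N := mth_count _ _ _ mu hm hmn.
  have c2 : (#|[pred j | good j]| <= #|S :\ i|)%N := subset_leq_card sub.
  have c3 : #|S| = (1 + #|S :\ i|)%N by rewrite (cardsD1 i S) iS.
  by have := leq_trans c1 c2; rewrite -cardS c3 add1n ltnn.
have top' := top i j iS jS.
have hi : 1 * \sum_(k < K i) (X i k w - mu i) < (K i)%:R * eps / 2.
  by rewrite ltNge; apply/negP => H; apply: (nBad i); rewrite /Bad /= /s (negbTE ngi).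
have hj : -1 * \sum_(k < K j) (X j k w - mu j) < (K j)%:R * eps / 2.
  by rewrite ltNge; apply/negP => H; apply: (nBad j); rewrite /Bad /= /s gj.
rewrite mul1r sumrB sumr_const card_ord -[mu i *+ _]mulr_natl in hi.
rewrite mulN1r sumrB sumr_const card_ord -[mu j *+ _]mulr_natl opprB in hj.
apply: (fin_arith _ (K i)%:R (K j)%:R (\sum_(k < K i) X i k w) (\sum_(k < K j) X j k w)
  (mu i) (mu j) mstar eps _ _ hi hj top' gj lt_i).
- by rewrite ltr0n; exact: (pulls_ge _ _ (np_pos i)).2.
- by rewrite ltr0n; exact: (pulls_ge _ _ (np_pos j)).2.
Qed.
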